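(* Let $T$ be a skew truss and $P$ a paragon in $T$. Then $P$ is completely prime if and only if there exists $p\in P$ such that, for all $a,d\in T$, $$[ad,ap,p]\in P\implies P_p^a\text{ is an ideal or } d\in P,$$ and $$[da,pa,p]\in P\implies P_p^a\text{ is an ideal or } d\in P.$$
   Context: A heap is a set with a ternary operation $[-,-,-]$ satisfying $[a_1,a_2,[a_3,a_4,a_5]]=[[a_1,a_2,a_3],a_4,a_5]$ and $[a,a,b]=b=[b,a,a]$. A skew truss is a heap with an associative multiplication satisfying $a[b,c,d]=[ab,ac,ad]$ and $[b,c,d]a=[ba,ca,da]$. A normal sub-heap is a non-empty subset $S$ closed under $[-,-,-]$ with $[[a,e,s],a,e]\in S$ for all $a$ and $e,s\in S$; $a\sim_S b$ iff $[a,b,s]\in S$ for some (equivalently all) $s\in S$. A sub-heap $S$ is closed if $[ts',ts,s]\in S$ and $[s't,st,s]\in S$ for all $s,s'\in S$, $t$. A paragon is a non-empty normal sub-heap $P$ all of whose $\sim_P$-classes are closed. An ideal is a normal sub-heap $I$ with $ti,it\in I$ for all $t\in T$, $i\in I$. For $p\in P$, $a\in T$, $P_p^a=\{[q,p,a]\mid q\in P\}$. A paragon $P$ is completely prime if for all $p\in P$ and $a,b,c\in T$: $[ab,ac,p]\in P$ implies that $P_p^a$ is an ideal or $[b,c,p]\in P$; and $[ba,ca,p]\in P$ implies that $P_p^a$ is an ideal or $[b,c,p]\in P$. *)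

(* Defs.v *)
Record skew_truss := SkewTruss {
  car :> Type;
  br : car -> car -> car -> car;
  mul : car -> car -> car;
  br_assoc : forall a1 a2 a3 a4 a5,
      br a1 a2 (br a3 a4 a5) = br (br a1 a2 a3) a4 a5;
  br_mal_l : forall a b, br a a b = b;
  br_mal_r : forall a b, br b a a = b;
  mul_assoc : forall a b c, mul a (mul b c) = mul (mul a b) c;
  mul_br_l : forall a b c d, mul a (br b c d) = br (mul a b) (mul a c) (mul a d);
  mul_br_r : forall a b c d, mul (br b c d) a = br (mul b a) (mul c a) (mul d a)
}.

Arguments br {_}.
Arguments mul {_}.

Section Defs.
Variable T : skew_truss.

Definition subheap (S : T -> Prop) : Prop :=
  forall x y z, S x -> S y -> S z -> S (br x y z).

Definition normal_subheap (S : T -> Prop) : Prop :=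
  (exists s, S s) /\ subheap S /\
  forall a e s, S e -> S s -> S (br (br a e s) a e).

Definition sim (S : T -> Prop) (a b : T) : Prop :=
  exists s, S s /\ S (br a b s).

Definition closed_subheap (S : T -> Prop) : Prop :=
  subheap S /\
  forall s s' t, S s -> S s' ->
    S (br (mul t s') (mul t s) s) /\ S (br (mul s' t) (mul s t) s).

Definition paragon (P : T -> Prop) : Prop :=
  normal_subheap P /\
  forall t0 : T, closed_subheap (fun x => sim P x t0).

Definition ideal (I : T -> Prop) : Prop :=
  normal_subheap I /\ forall t i, I i -> I (mul t i) /\ I (mul i t).

Definition Ppa (P : T -> Prop) (p a : T) : T -> Prop :=
  fun x => exists q, P q /\ x = br q p a.

Definition completely_prime (P : T -> Prop) : Prop :=
  paragon P /\
  forall p a b c, P p ->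
    (P (br (mul a b) (mul a c) p) -> ideal (Ppa P p a) \/ P (br b c p)) /\
    (P (br (mul b a) (mul c a) p) -> ideal (Ppa P p a) \/ P (br b c p)).

End Defs.

(* Main.v *)
Require Import Defs.

Lemma brK (T : skew_truss) (x y z w : T) : br (br x y z) z w = br x y w.
Proof. rewrite <- br_assoc. rewrite br_mal_l. reflexivity. Qed.

Lemma ideal_ext (T : skew_truss) (I J : T -> Prop) :
  (forall x, I x <-> J x) -> ideal T I -> ideal T J.
Proof.
  intros H [[[s Hs] [Hsh Hn]] Hm]. split; [split; [|split]|].
  - exists s. apply H. exact Hs.
  - intros x y z Hx Hy Hz. apply H. apply Hsh; apply H; assumption.
  - intros a e s' He Hs'. apply H. apply Hn; apply H; assumption.
  - intros t i Hi. destruct (Hm t i (proj2 (H i) Hi)). split; apply H; assumption.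
Qed.

Lemma Ppa_ext (T : skew_truss) (P : T -> Prop) p p0 a :
  subheap T P -> P p -> P p0 -> forall x, Ppa T P p a x <-> Ppa T P p0 a x.
Proof.
  intros Hsh Hp Hp0 x. split; intros [q [Hq ->]].
  - exists (br q p p0). split. apply Hsh; assumption. rewrite brK. reflexivity.
  - exists (br q p0 p). split. apply Hsh; assumption. rewrite brK. reflexivity.
Qed.

Theorem lemma4p8 (T : skew_truss) (P : T -> Prop) :
  paragon T P ->
  (completely_prime T P <->
   exists p, P p /\
     forall a d : T,
       (P (br (mul a d) (mul a p) p) -> ideal T (Ppa T P p a) \/ P d) /\
       (P (br (mul d a) (mul p a) p) -> ideal T (Ppa T P p a) \/ P d)).
Proof.
  intros Hpar. pose proof Hpar as Hpar'. destruct Hpar' as [[[s Hs] [Hsh Hn]] _]. split.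
  - intros [_ HC]. exists s. split; [exact Hs|]. intros a d.
    destruct (HC s a d s Hs) as [H1 H2]. split; intro H.
    + destruct (H1 H); [left; assumption|right]. rewrite br_mal_r in *. assumption.
    + destruct (H2 H); [left; assumption|right]. rewrite br_mal_r in *. assumption.
  - intros [p0 [Hp0 HP]]. split; [exact Hpar|].
    intros p a b c Hp. destruct (HP a (br b c p0)) as [H1 H2]. split; intro H.
      * rewrite mul_br_l, !brK in H1.
        assert (P (br (mul a b) (mul a c) p0)) as H'.
        { rewrite <- (brK _ _ _ p). apply Hsh; assumption. }
        destruct (H1 H') as [Hi|Hd].
        -- left. eapply ideal_ext; [|exact Hi]. intro x. apply iff_sym. apply Ppa_ext; assumption.
        -- right. rewrite <- (brK _ _ _ p0). apply Hsh; assumption.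
      * rewrite mul_br_r, !brK in H2.
        assert (P (br (mul b a) (mul c a) p0)) as H'.
        { rewrite <- (brK _ _ _ p). apply Hsh; assumption. }
        destruct (H2 H') as [Hi|Hd].
        -- left. eapply ideal_ext; [|exact Hi]. intro x. apply iff_sym. apply Ppa_ext; assumption.
        -- right. rewrite <- (brK _ _ _ p0). apply Hsh; assumption.
Qed.
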